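(* Let $f:\mathbb{R}^n\to\mathbb{R}$ be $r+1$ times continuously differentiable for some integer $r\ge1$, with $\nabla f$ Lipschitz continuous with constant $L$. Let $x^*$ satisfy $\nabla f(x^* )=0$, and suppose that $\nabla^2 f(x^* )$ has exactly $p$ negative eigenvalues, where $1\le p<n$, and at least one positive eigenvalue; let $\lambda_1>0$ be the largest eigenvalue of $\nabla^2 f(x^* )$. Let \[ 0<\alpha<\frac{4}{\lambda_1},\qquad \beta\in\Big(\max\big(-1+\tfrac{\alpha\lambda_1}{2},\,0\big),\,1\Big), \] and let \[ DG(x^*,x^* )=\begin{bmatrix}(1+\beta)I-\alpha\nabla^2 f(x^* ) & -\beta I\\ I & 0\end{bmatrix}\in\mathbb{R}^{2n\times 2n}. \] Then there exist matrices $\tilde V_s\in\mathbb{R}^{2n\times(2n-p)}$ and $\tilde V_u\in\mathbb{R}^{2n\times p}$ such that: (a) the $2n\times 2n$ matrix $\tilde V=[\tilde V_s\,|\,\tilde V_u]$ is nonsingular; (b) the column space of $\tilde V_s$ is invariant under $DG(x^*,x^* )$, and all eigenvalues of the restriction of $DG(x^*,x^* )$ to this subspace have magnitude less than or equal to $1$; (c) the column space of $\tilde V_u$ is invariant under $DG(x^*,x^* )$, and all eigenvalues of the restriction of $DG(x^*,x^* )$ to this subspace have magnitude greater than $1$.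
   Context: $DG(x^*,x^* )$ is the Jacobian at $(x^*,x^* )$ of the heavy-ball map $G(z_1,z_2)=(z_1-\alpha\nabla f(z_1)+\beta(z_1-z_2),\,z_1)$ on $\mathbb{R}^n\times\mathbb{R}^n$. Eigenvalues may be complex; ''magnitude'' means complex modulus. *)

(* Defs.v *)
From HB Require Import structures.
From mathcomp Require Import all_boot all_order all_algebra.
From mathcomp Require Import all_classical all_reals all_analysis.
From mathcomp Require Import complex.
Set Implicit Arguments. Unset Strict Implicit. Unset Printing Implicit Defensive.
Import Order.TTheory GRing.Theory Num.Theory.
Import numFieldNormedType.Exports.
Local Open Scope ring_scope.

Definition evec (R : realType) (n : nat) (i : 'I_n) : 'rV[R]_n := delta_mx 0 i.

Definition pderiv (R : realType) (n : nat) (i : 'I_n) (g : 'rV[R]_n -> R) (x : 'rV[R]_n) : R :=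
  'D_(evec R i) g x.

Fixpoint Ck (R : realType) (n : nat) (k : nat) (g : 'rV[R]_n -> R) : Prop :=
  match k with
  | 0 => continuous g
  | k'.+1 => continuous g /\
             (forall (i : 'I_n) (x : 'rV[R]_n), derivable g x (evec R i)) /\
             (forall i : 'I_n, Ck k' (pderiv i g))
  end.

Definition grad (R : realType) (n : nat) (f : 'rV[R]_n -> R) (x : 'rV[R]_n) : 'rV[R]_n :=
  \row_i pderiv i f x.
Definition hessian (R : realType) (n : nat) (f : 'rV[R]_n -> R) (x : 'rV[R]_n) : 'M[R]_n :=
  \matrix_(i, j) pderiv j (pderiv i f) x.

Definition enorm (R : realType) (n : nat) (v : 'rV[R]_n) : R :=
  Num.sqrt (\sum_i v 0 i ^+ 2).

(* Jacobian of the heavy-ball map at (xs, xs) *)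
Definition DG (R : realType) (n : nat) (alpha beta : R) (H : 'M[R]_n) : 'M[R]_(n + n) :=
  block_mx ((1 + beta)%:M - alpha *: H) (- beta%:M) 1%:M 0.

Definition ceig (R : realType) (m : nat) (B : 'M[R]_m) (z : R[i]) : bool :=
  root (map_poly (fun a : R => (a%:C)%C) (char_poly B)) z.

(* Main.v *)
Require Import Defs.
From HB Require Import structures.
From mathcomp Require Import all_boot all_order all_algebra.
From mathcomp Require Import all_classical all_reals all_analysis.
From mathcomp Require Import complex.
From mathcomp Require Import ring lra zify.
Import Order.TTheory GRing.Theory Num.Theory.
Import numFieldNormedType.Exports.
Local Open Scope ring_scope.
Local Open Scope complex_scope.
Set Implicit Arguments. Unset Strict Implicit. Unset Printing Implicit Defensive.


Lemma eig_horner (F : comNzRingType) k (B : 'M[F]_k.+1) (v : 'rV_k.+1) a p :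
  v *m B = a *: v -> v *m horner_mx B p = p.[a] *: v.
Proof.
move=> hv; elim/(@poly_ind F): p => [|p c IH].
  by rewrite rmorph0 mulmx0 horner0 scale0r.
rewrite rmorphD rmorphM /= horner_mx_X horner_mx_C mulmxDr mulmxA IH.
rewrite -scalemxAl hv mul_mx_scalar scalerA.
by rewrite hornerMXaddC scalerDl.
Qed.

Lemma horner_mx_intertw (F : comNzRingType) m k (A : 'M[F]_m.+1) (B : 'M[F]_(k.+1))
   (V : 'M[F]_(k.+1, m.+1)) p :
  V *m A = B *m V -> V *m horner_mx A p = horner_mx B p *m V.
Proof.
move=> h; elim/(@poly_ind F): p => [|p c IH].
  by rewrite !rmorph0 mulmx0 mul0mx.
rewrite !rmorphD !rmorphM /= !horner_mx_X !horner_mx_C mulmxDr mulmxDl.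
by rewrite mulmxA IH -!mulmxA h mul_mx_scalar mul_scalar_mx.
Qed.

Lemma char_poly_blk (F : fieldType) m k1 k2 (e : (k1 + k2)%N = m) (A : 'M[F]_m)
  (V1 : 'M[F]_(k1, m)) (V2 : 'M[F]_(k2, m)) (B1 : 'M[F]_k1) (B2 : 'M[F]_k2) :
  V1 *m A = B1 *m V1 -> V2 *m A = B2 *m V2 -> \rank (col_mx V1 V2) = m ->
  char_poly A = char_poly B1 * char_poly B2.
Proof.
case: m / e A V1 V2 => A V1 V2 h1 h2 hr.
set W := col_mx V1 V2.
have Wu : W \in unitmx by rewrite -row_full_unit /row_full hr.
have hW : W *m A = block_mx B1 0 0 B2 *m W.
  by rewrite mul_col_mx mul_block_col !mul0mx addr0 add0r h1 h2.
have hA : A = invmx W *m block_mx B1 0 0 B2 *m W by rewrite -mulmxA -hW mulKmx.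
have e1 : map_mx polyC (invmx W) *m map_mx polyC W = 1%:M.
  by rewrite -map_mxM mulVmx // map_mx1.
have hc : char_poly_mx A = map_mx polyC (invmx W) *m
   char_poly_mx (block_mx B1 0 0 B2) *m map_mx polyC W.
  rewrite /char_poly_mx hA !map_mxM mulmxBr mulmxBl mul_mx_scalar -scalemxAl e1.
  by rewrite scalemx1.
rewrite /char_poly hc !det_mulmx mulrAC -det_mulmx e1 det1 mul1r.
rewrite /char_poly_mx map_block_mx !map_mx0 (scalar_mx_block k1 k2) opp_block_mx.
rewrite add_block_mx !oppr0 !addr0 det_ublock //.
Qed.

Lemma CP (R : rcfType) (P Q : {poly R}) (S : pred R[i]) :
  (forall z, root (map_poly (real_complex R) P) z -> S z) ->
  (forall z, root (map_poly (real_complex R) Q) z -> ~~ S z) -> coprimep P Q.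
Proof.
move=> hP hQ; rewrite -(coprimep_map (real_complex R)) /coprimep.
apply/negPn/negP => /closed_rootP [z]; rewrite root_gcd => /andP [h1 h2].
by have := hQ z h2; rewrite hP.
Qed.

Lemma eig_sub (R : rcfType) k m (A : 'M[R]_m.+1) (V : 'M[R]_(k, m.+1)) (B : 'M[R]_k)
  P z :
  V *m A = B *m V -> row_free V -> V *m horner_mx A P = 0 ->
  root (map_poly (real_complex R) (char_poly B)) z ->
  root (map_poly (real_complex R) P) z.
Proof.
case: k V B => [|k] V B h rf hP.
  by rewrite /char_poly det_mx00 rmorph1 /root hornerC oner_eq0.
have hB : horner_mx B P = 0.
  by apply/eqP; rewrite -(mulmx_free_eq0 _ rf) -(@horner_mx_intertw _ _ _ _ _ _ P h) hP eqxx.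
rewrite map_char_poly -eigenvalue_root_char => /eigenvalueP [v hv nz].
have := @eig_horner _ _ _ _ _ (map_poly (real_complex R) P) hv.
rewrite -map_horner_mx hB map_mx0 mulmx0 => /esym/eqP.
by rewrite scaler_eq0 (negbTE nz) orbF.
Qed.

Lemma GL (R : rcfType) m (A : 'M[R]_m) (P Q : {poly R}) (S : pred R[i]) k :
  (0 < m)%N -> P \is monic -> Q \is monic -> char_poly A = P * Q ->
  (forall z, root (map_poly (real_complex R) P) z -> S z) ->
  (forall z, root (map_poly (real_complex R) Q) z -> ~~ S z) ->
  k = (size P).-1 ->
  exists (V : 'M[R]_(k, m)) (B : 'M[R]_k),
    V *m A = B *m V /\ (V :=: kermxpoly A P)%MS /\
    (forall z, root (map_poly (real_complex R) (char_poly B)) z -> S z).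
Proof.
case: m A => [//|m] A _ mP mQ hc hP hQ ek.
have cop := CP hP hQ.
have CH := Cayley_Hamilton A; rewrite hc in CH.
set KP := kermxpoly A P; set KQ := kermxpoly A Q.
have full : (KP + KQ :=: 1%:M)%MS.
  apply: eqmx_trans (eqmx_sym (kermxpolyM A cop)) _.
  by rewrite /kermxpoly CH; apply: kermx0.
have dsum : (\rank KP + \rank KQ)%N = m.+1.
  by rewrite -mxrank_disjoint_sum ?mxdirect_kermxpoly // full mxrank1.
set VP := row_base KP; set VQ := row_base KQ.
have cAA : comm_mx A A by [].
have stP : stablemx VP A by rewrite stablemx_row_base comm_mx_stable_kermxpoly.
have stQ : stablemx VQ A by rewrite stablemx_row_base comm_mx_stable_kermxpoly.
set BP := conjmx VP A; set BQ := conjmx VQ A.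
have hVP : VP *m A = BP *m VP by rewrite /BP /conjmx mulmxKpV.
have hVQ : VQ *m A = BQ *m VQ by rewrite /BQ /conjmx mulmxKpV.
have hcb : char_poly A = char_poly BP * char_poly BQ.
  apply: (char_poly_blk dsum) hVP hVQ _.
  by rewrite -addsmxE (adds_eqmx (eq_row_base _) (eq_row_base _)) full mxrank1.
have rootBP : forall z, root (map_poly (real_complex R) (char_poly BP)) z ->
    root (map_poly (real_complex R) P) z.
  move=> z; apply: (eig_sub hVP (row_base_free _)).
  have : (VP <= KP)%MS by rewrite eq_row_base.
  by move/sub_kermxP.
have rootBQ : forall z, root (map_poly (real_complex R) (char_poly BQ)) z ->
    root (map_poly (real_complex R) Q) z.
  move=> z; apply: (eig_sub hVQ (row_base_free _)).
  have : (VQ <= KQ)%MS by rewrite eq_row_base.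
  by move/sub_kermxP.
have c1 : coprimep (char_poly BP) Q.
  by apply: (CP (S := S)) => z h; [apply: hP; apply: rootBP | apply: hQ].
have c2 : coprimep (char_poly BQ) P.
  apply: (CP (S := predC S)) => z h /=; first by apply: hQ; apply: rootBQ.
  by rewrite negbK; apply: hP.
have d1 : char_poly BP %| P.
  by rewrite -(Gauss_dvdpl _ c1) -hc hcb dvdp_mulr.
have d2 : char_poly BQ %| Q.
  by rewrite -(Gauss_dvdpl _ c2) mulrC -hc hcb dvdp_mull.
have s1 := dvdp_leq (monic_neq0 mP) d1; rewrite size_char_poly in s1.
have s2 := dvdp_leq (monic_neq0 mQ) d2; rewrite size_char_poly in s2.
have sPQ : size (P * Q) = m.+2 by rewrite -hc size_char_poly.
rewrite size_mul ?monic_neq0 // in sPQ.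
have ekd : \rank KP = k.
  rewrite ek; move: s1 s2 sPQ dsum; rewrite -!subn1.
  set a := \rank KP; set b := \rank KQ; set x := size P; set y := size Q.
  lia.
clear ek; case: k / ekd.
exists VP, BP; split => //; split; first exact: eq_row_base.
by move=> z h; apply: hP; apply: rootBP.
Qed.


Lemma poly_eq_nz (R : numFieldType) (p q : {poly R}) :
  (forall z : R, z != 0 -> p.[z] = q.[z]) -> p = q.
Proof.
move=> h; apply/eqP; rewrite -subr_eq0; apply/negPn/negP => nz.
pose rs : seq R := [seq i.+1%:R | i <- iota 0 (size (p - q))].
have hall : all (root (p - q)) rs.
  apply/allP => x /mapP [i _ ->]; rewrite /root hornerD hornerN h ?subrr //.
have hu : uniq rs.
  by rewrite map_inj_uniq ?iota_uniq // => i j /eqP; rewrite eqr_nat eqSS => /eqP.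
by have := max_poly_roots nz hall hu; rewrite size_map size_iota ltnn.
Qed.

Lemma horner_char_poly (R : comNzRingType) n (A : 'M[R]_n) z :
  (char_poly A).[z] = \det (z%:M - A).
Proof.
rewrite /char_poly -horner_evalE -det_map_mx; congr (\det _).
apply/matrixP => i j; rewrite !mxE /= horner_evalE.
by rewrite hornerD hornerN hornerMn hornerX hornerC.
Qed.

Lemma char_poly_tr (R : comNzRingType) n (A : 'M[R]_n) :
  char_poly A^T = char_poly A.
Proof.
rewrite /char_poly -det_tr; congr (\det _).
by apply/matrixP => i j; rewrite !mxE eq_sym.
Qed.

Lemma charDG (R : realType) n (H : 'M[R]_n) (lam : 'I_n -> R) (alpha beta : R) :
  alpha != 0 -> char_poly H = \prod_i ('X - (lam i)%:P) ->
  char_poly (DG alpha beta H) =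
  \prod_i ('X^2 - (1 + beta - alpha * lam i)%:P * 'X + beta%:P).
Proof.
move=> a0 hH; apply: poly_eq_nz => z z0.
rewrite horner_char_poly horner_prod.
set M1 := (1 + beta)%:M - alpha *: H.
have e1 : z%:M - DG alpha beta H =
    block_mx (z%:M - M1) (beta%:M) (-1%:M) (z%:M).
  rewrite /DG (scalar_mx_block n n z) opp_block_mx add_block_mx.
  by rewrite !opprK !oppr0 !addr0 !add0r.
have e2 : block_mx (z%:M - M1) (beta%:M) (-1%:M) (z%:M) *m
          block_mx (1%:M : 'M[R]_n) 0 (z^-1%:M) 1%:M =
          block_mx (z%:M - M1 + (beta / z)%:M) (beta%:M) 0 (z%:M).
  rewrite mulmx_block !mulmx1 !mulmx0 !add0r -!scalar_mxM divff //.
  by rewrite addNr.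
have dL : \det (block_mx (1%:M : 'M[R]_n) 0 (z^-1%:M) 1%:M) = 1.
  by rewrite det_lblock !det1 mulr1.
have -> : \det (z%:M - DG alpha beta H) =
          \det (z%:M - M1 + (beta / z)%:M) * z ^+ n.
  rewrite e1; have := congr1 determinant e2; rewrite det_mulmx dL mulr1 => ->.
  by rewrite det_ublock det_scalar.
pose c := z - (1 + beta) + beta / z.
have e3 : z%:M - M1 + (beta / z)%:M = (- alpha) *: ((- c / alpha)%:M - H).
  apply/matrixP => i j; rewrite !mxE /c; case: eqP => _ /=;
    rewrite ?mulr1n ?mulr0n; field; by rewrite ?a0 ?z0.
rewrite e3 detZ -horner_char_poly hH horner_prod.
have ha : (- alpha) ^+ n = \prod_(i < n) (- alpha) by rewrite prodr_const card_ord.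
have hz : z ^+ n = \prod_(i < n) z by rewrite prodr_const card_ord.
rewrite ha hz -!big_split /=; apply: eq_bigr => i _.
rewrite !hornerE /c; field; by rewrite ?a0 ?z0.
Qed.


Lemma neg_roots (R : rcfType) (mu b : R) : 0 < b -> b < 1 -> 1 + b < mu ->
  let d := Num.sqrt (mu ^+ 2 - 4 * b) in
  1 < (mu + d) / 2 /\ 0 <= (mu - d) / 2 <= 1 /\
  (mu + d) / 2 + (mu - d) / 2 = mu /\ (mu + d) / 2 * ((mu - d) / 2) = b.
Proof.
move=> b0 b1 hm d.
have d0 : 0 <= d by apply: sqrtr_ge0.
have dd : d ^+ 2 = mu ^+ 2 - 4 * b by rewrite sqr_sqrtr //; nra.
split; first by nra.
split; first by apply/andP; split; nra.
split; first by field.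
by rewrite -[RHS]mulr1 -[b](_ : (mu ^+ 2 - d ^+ 2) / 4 = b); [field | rewrite dd; field].
Qed.

Lemma root_prod_ex (F : idomainType) (I : finType) (P : pred I) (G : I -> {poly F}) x :
  root (\prod_(i | P i) G i) x -> exists2 i, P i & root (G i) x.
Proof.
apply: (big_rec (fun p => root p x -> exists2 i, P i & root (G i) x)).
  by rewrite /root hornerC oner_eq0.
move=> i p Pi IH; rewrite rootM => /orP [h|h]; [by exists i | exact: IH h].
Qed.

Lemma normC_real (R : rcfType) (x : R) : `|(x%:C)%C| = ((`|x|)%:C)%C.
Proof. by rewrite normc_def /= expr0n addr0 sqrtr_sqr. Qed.

Lemma kermxpoly_char (F : fieldType) m (A : 'M[F]_m) :
  (kermxpoly A (char_poly A) :=: 1%:M)%MS.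
Proof.
case: m A => [|m] A; first by rewrite !flatmx0.
by rewrite /kermxpoly Cayley_Hamilton; apply: kermx0.
Qed.


Lemma cplx_root_le1 (R : rcfType) (mu b : R) (z : R[i]) : 0 < b -> b < 1 ->
  -(1+b) < mu -> mu <= 1+b -> z^+2 - mu%:C * z + b%:C = 0 -> `|z| <= 1.
Proof.
move=> b0 b1 m1 m2; case: z => x y; rewrite expr2.
move/eqP; rewrite eq_complex /= => /andP [/eqP h1 /eqP h2].
rewrite normc_def /= -[1]/(((1:R)%:C)%C) lecR -sqrtr1 ler_sqrt ?ler01 //.
have : y * (2 * x - mu) = 0 by rewrite -h2; ring.
move/eqP; rewrite mulf_eq0 => /orP [/eqP y0|/eqP e].
  rewrite y0 in h1 *; rewrite expr0n /= addr0.
  have hx : x * x - mu * x + b = 0 by rewrite -h1; ring.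
  case: (lerP (x ^+ 2) 1) => // hx1.
  exfalso.
  case: (lerP 0 x) => hx0.
    have x1 : 1 < x by nra.
    nra.
  have x1 : x < -1 by nra.
  nra.
have hy : y ^+ 2 = b - x ^+ 2.
  rewrite -[LHS]addr0 -h1; have -> : mu = 2 * x by lra. ring.
rewrite hy; lra.
Qed.

Lemma map_quad (R : rcfType) (m b : R) z :
  root (map_poly (real_complex R) ('X^2 - m%:P * 'X + b%:P)) z ->
  z^+2 - (m%:C) * z + b%:C = 0.
Proof.
rewrite /root rmorphD rmorphB !rmorphM /= map_polyX !map_polyC /=.
by rewrite !hornerE expr2 => /eqP.
Qed.

Lemma quad_fact (F : comNzRingType) (a b : F) :
  'X^2 - (a + b)%:P * 'X + (a * b)%:P = ('X - a%:P) * ('X - b%:P).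
Proof. rewrite polyCD polyCM; ring. Qed.


Unset Implicit Arguments.
Local Close Scope complex_scope.

Theorem theorem2p4 (R : realType) (n r p : nat) (f : 'rV[R]_n -> R) (L : R)
  (xs : 'rV[R]_n) (lam : 'I_n -> R) (lam1 alpha beta : R) :
  (1 <= r)%N ->
  Ck r.+1 f ->
  (forall x y : 'rV[R]_n, enorm (grad f x - grad f y) <= L * enorm (x - y)) ->
  grad f xs = 0 ->
  (* lam lists the eigenvalues of the Hessian at xs, with multiplicity *)
  char_poly (hessian f xs) = \prod_(i < n) ('X - (lam i)%:P) ->
  #|[set i | lam i < 0]| = p ->
  (1 <= p < n)%N ->
  (exists i, 0 < lam i) ->
  (* lam1 is the largest eigenvalue *)
  (exists i, lam i = lam1) -> (forall i, lam i <= lam1) ->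
  0 < alpha -> alpha < 4 / lam1 ->
  Num.max (-1 + alpha * lam1 / 2) 0 < beta -> beta < 1 ->
  exists (Vs : 'M[R]_(n + n, (n + n - p)%N)) (Vu : 'M[R]_(n + n, p)),
    \rank (row_mx Vs Vu) = (n + n)%N /\
    (exists Bs : 'M[R]_(n + n - p),
       DG alpha beta (hessian f xs) *m Vs = Vs *m Bs /\
       forall z : R[i], ceig Bs z -> `|z| <= 1) /\
    (exists Bu : 'M[R]_p,
       DG alpha beta (hessian f xs) *m Vu = Vu *m Bu /\
       forall z : R[i], ceig Bu z -> 1 < `|z|).
Proof.
move=> _ _ _ _ hchar hp hpn _ _ hmax a0 _ hb hb1.
have hb0 : 0 < beta by apply: le_lt_trans hb; rewrite le_max lexx orbT.
have hb2 : -1 + alpha * lam1 / 2 < beta by apply: le_lt_trans hb; rewrite le_max lexx.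
set H := hessian f xs.
have lamle : forall i, alpha * lam i < 2 + 2 * beta.
  by move=> i; have := hmax i; nra.
pose mu i := 1 + beta - alpha * lam i.
pose dd i := Num.sqrt (mu i ^+ 2 - 4 * beta).
pose zp i := (mu i + dd i) / 2.
pose zm i := (mu i - dd i) / 2.
have hneg : forall i, lam i < 0 ->
    1 < zp i /\ 0 <= zm i <= 1 /\ zp i + zm i = mu i /\ zp i * zm i = beta.
  move=> i hi; apply: neg_roots => //; rewrite /mu; nra.
pose q i : {poly R} := 'X^2 - (mu i)%:P * 'X + beta%:P.
pose Pu := \prod_(i | lam i < 0) ('X - (zp i)%:P).
pose Ps := (\prod_(i | lam i < 0) ('X - (zm i)%:P)) * \prod_(i | ~~ (lam i < 0)) q i.
have hchi : char_poly (DG alpha beta H) = Pu * Ps.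
  rewrite (charDG _ _ hchar) ?gt_eqF // (bigID (fun i => lam i < 0)) /=.
  rewrite /Ps mulrA -big_split /=; congr (_ * _); apply: eq_bigr => i hi.
  have [_ [_ [hs hpr]]] := hneg i hi.
  have -> : 'X^2 - (1 + beta - alpha * lam i)%:P * 'X + beta%:P =
      'X^2 - (zp i + zm i)%:P * 'X + (zp i * zm i)%:P :> {poly R}.
    by rewrite hs hpr.
  exact: quad_fact.
set A := (DG alpha beta H)^T.
have hA : char_poly A = Pu * Ps by rewrite char_poly_tr.
have mPu : Pu \is monic by apply: monic_prod_XsubC.
have mPs : Ps \is monic.
  have := char_poly_monic (DG alpha beta H); rewrite hchi monicMl //.
have m0 : (0 < n + n)%N by lia.
pose S := fun z : R[i] => `|z| <= 1.
have rPu : forall z, root (map_poly (real_complex R) Pu) z -> ~~ S z.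
  move=> z; rewrite rmorph_prod => /root_prod_ex [i hi].
  rewrite /= map_polyXsubC root_XsubC => /eqP ->.
  have [h1 _] := hneg i hi.
  rewrite /S normC_real -[1]/(((1:R)%:C)%C) lecR ger0_norm ?(ltW (lt_trans ltr01 h1)) //.
  by rewrite -ltNge.
have rPs : forall z, root (map_poly (real_complex R) Ps) z -> S z.
  move=> z; rewrite rmorphM rootM => /orP [].
    rewrite rmorph_prod => /root_prod_ex [i hi].
    rewrite /= map_polyXsubC root_XsubC => /eqP ->.
    have [_ [/andP [h1 h2] _]] := hneg i hi.
    by rewrite /S normC_real -[1]/(((1:R)%:C)%C) lecR ger0_norm.
  rewrite rmorph_prod => /root_prod_ex [i hi].
  move=> /map_quad h.
  rewrite -leNgt in hi.
  apply: (@cplx_root_le1 _ (mu i) beta z) => //; rewrite /mu.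
    by have := lamle i; lra.
  by nra.
have cop : coprimep Ps Pu := CP rPs rPu.
have hA' : char_poly A = Ps * Pu by rewrite hA mulrC.
have sPu : size Pu = p.+1.
  rewrite /Pu -big_filter size_prod_XsubC size_filter -hp cardsE cardE.
  by rewrite /enum_mem size_filter.
have sPP : size (Pu * Ps) = (n + n).+1 by rewrite -hA size_char_poly.
rewrite size_monicM ?monic_neq0 // sPu in sPP.
have eks : (n + n - p)%N = (size Ps).-1 by move: sPP; set y := size Ps; lia.
have ekp : p = (size Pu).-1 by rewrite sPu.
have [Vs [Bs [hs [ks es]]]] :=
  @GL R (n + n) A Ps Pu S (n + n - p)%N m0 mPs mPu hA' rPs rPu eks.
have [Vu [Bu [hu [ku eu]]]] :=
  @GL R (n + n) A Pu Ps (predC S) p m0 mPu mPs hA rPu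
     (fun z h => introT negPn (rPs z h)) ekp.
exists Vs^T, Vu^T; split.
  rewrite -tr_col_mx mxrank_tr -addsmxE (adds_eqmx ks ku) -(kermxpolyM A cop).
  by rewrite -hA' kermxpoly_char mxrank1.
split.
  exists Bs^T; split; first by rewrite -trmx_mul -hs trmx_mul trmxK.
  by move=> z; rewrite /ceig char_poly_tr; apply: es.
exists Bu^T; split; first by rewrite -trmx_mul -hu trmx_mul trmxK.
move=> z; rewrite /ceig char_poly_tr => /eu /=.
by rewrite /S real_ltNge ?normr_real ?real1.
Qed.
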